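(* Let $\sigma_1,\sigma_2>0$ and let $\gamma:\mathbb{S}^1\times[0,T)\to\mathbb{R}^2$ be a smooth family of closed embedded plane curves evolving under $\partial_t\gamma=(\sigma_1k+\sigma_2)\nu$. Suppose that the winding number of the initial curve is positive. Then $T<\infty$ (i.e. the solution cannot exist on $[0,\infty)$).
   Context: $\nu$ is the inward unit normal (the unit tangent rotated by $\pi/2$), $k$ the curvature, $s$ arclength, and the winding number is $\omega=\frac1{2\pi}\int_\gamma k\,ds$. *)

(* Defs.v *)
From Stdlib Require Import Reals.
From Coquelicot Require Import Coquelicot.
Open Scope R_scope.

(* A plane curve family gamma(u,t) = (X u t, Y u t), u in R parametrising S^1 = R/Z
   (period 1), t the time. *)

Fixpoint Ck_strip (a : R) (b : Rbar) (n : nat) (f : R -> R -> R) : Prop :=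
  match n with
  | O => forall u t, a < t -> Rbar_lt (Finite t) b ->
           continuous (fun p : R * R => f (fst p) (snd p)) (u, t)
  | S m =>
      (forall u t, a < t -> Rbar_lt (Finite t) b -> ex_derive (fun v => f v t) u) /\
      (forall u t, a < t -> Rbar_lt (Finite t) b -> ex_derive (fun s => f u s) t) /\
      Ck_strip a b m (fun u t => Derive (fun v => f v t) u) /\
      Ck_strip a b m (fun u t => Derive (fun s => f u s) t)
  end.

Definition smooth_strip (a : R) (b : Rbar) (f : R -> R -> R) : Prop :=
  forall n, Ck_strip a b n f.

Definition du (f : R -> R -> R) : R -> R -> R := fun u t => Derive (fun v => f v t) u.

Definition speed (X Y : R -> R -> R) (u t : R) : R :=
  sqrt (du X u t ^ 2 + du Y u t ^ 2).

Definition tanx (X Y : R -> R -> R) (u t : R) : R := du X u t / speed X Y u t.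
Definition tany (X Y : R -> R -> R) (u t : R) : R := du Y u t / speed X Y u t.

Definition nux (X Y : R -> R -> R) (u t : R) : R := - tany X Y u t.
Definition nuy (X Y : R -> R -> R) (u t : R) : R := tanx X Y u t.

(* signed curvature k = <gamma_ss, nu> = (x_u y_uu - y_u x_uu) / |gamma_u|^3 *)
Definition curv (X Y : R -> R -> R) (u t : R) : R :=
  (du X u t * du (du Y) u t - du Y u t * du (du X) u t) / (speed X Y u t ^ 3).

Definition winding (X Y : R -> R -> R) (t : R) : R :=
  / (2 * PI) * RInt (fun u => curv X Y u t * speed X Y u t) 0 1.

(* Main.v *)
Require Import Defs.
From Stdlib Require Import Reals Lra Classical ClassicalEpsilon.
From Coquelicot Require Import Coquelicot.
Open Scope R_scope.

Definition dt (f : R -> R -> R) : R -> R -> R := fun u t => Derive (fun s => f u s) t.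
Definition SM a f := smooth_strip a p_infty f.

Lemma SM_du a f : SM a f -> SM a (du f).
Proof. intros H n. destruct (H (S n)) as (_&_&H1&_). exact H1. Qed.
Lemma SM_dt a f : SM a f -> SM a (dt f).
Proof. intros H n. destruct (H (S n)) as (_&_&_&H1). exact H1. Qed.
Lemma SM_cont a f u t : SM a f -> a < t -> continuity_2d_pt f u t.
Proof. intros H Ht. apply continuity_2d_pt_filterlim. exact (H O u t Ht I). Qed.
Lemma SM_exu a f u t : SM a f -> a < t -> ex_derive (fun v => f v t) u.
Proof. intros H Ht. exact (proj1 (H 1%nat) u t Ht I). Qed.
Lemma SM_ext a f u t : SM a f -> a < t -> ex_derive (fun s => f u s) t.
Proof. intros H Ht. exact (proj1 (proj2 (H 1%nat)) u t Ht I). Qed.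

Lemma loc2d_strip a (P : R -> R -> Prop) u t : a < t ->
  (forall u' t', a < t' -> P u' t') -> locally_2d P u t.
Proof.
  intros Ht HP. assert (Hp : 0 < t - a) by lra.
  exists (mkposreal _ Hp). intros u' t' _ H'. apply HP.
  simpl in H'. apply Rabs_def2 in H'. lra.
Qed.

Lemma SM_schwarz a f u t : SM a f -> a < t -> du (dt f) u t = dt (du f) u t.
Proof.
  intros H Ht. unfold du, dt.
  apply (Schwarz f).
  - apply (loc2d_strip a); auto. intros u' t' Ht'.
    split; [|split; [|split]].
    + apply (SM_exu a); auto.
    + apply (SM_ext a); auto.
    + apply (SM_exu a (dt f)); auto. apply SM_dt; auto.
    + apply (SM_ext a (du f)); auto. apply SM_du; auto.
  - apply (SM_cont a (du (dt f))); auto. apply SM_du, SM_dt; auto.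
  - apply (SM_cont a (dt (du f))); auto. apply SM_dt, SM_du; auto.
Qed.

Lemma per_du (f : R -> R -> R) : (forall u t, f (u+1) t = f u t) ->
  forall u t, du f (u+1) t = du f u t.
Proof.
  intros H u t. unfold du, Derive. f_equal. apply Lim_ext. intro h.
  replace (u + 1 + h) with ((u + h) + 1) by ring. rewrite !H. reflexivity.
Qed.
Lemma per_dt (f : R -> R -> R) : (forall u t, f (u+1) t = f u t) ->
  forall u t, dt f (u+1) t = dt f u t.
Proof.
  intros H u t. unfold dt. apply Derive_ext. intro s. apply H.
Qed.

Lemma c2_comp (g : R -> R) f u t : continuity_2d_pt f u t -> continuous g (f u t) ->
  continuity_2d_pt (fun u t => g (f u t)) u t.
Proof.
  intros Hf Hg. apply continuity_2d_pt_filterlim.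
  apply continuity_2d_pt_filterlim in Hf.
  eapply filterlim_comp. exact Hf. exact Hg.
Qed.
Lemma c2_sqrt f u t : continuity_2d_pt f u t -> continuity_2d_pt (fun u t => sqrt (f u t)) u t.
Proof. intros; apply c2_comp; auto. apply continuous_sqrt. Qed.
Lemma c2_pow f n u t : continuity_2d_pt f u t -> continuity_2d_pt (fun u t => f u t ^ n) u t.
Proof.
  intros Hf. induction n.
  - simpl. apply continuity_2d_pt_const.
  - simpl. apply continuity_2d_pt_mult; auto.
Qed.
Lemma c2_div f g u t : continuity_2d_pt f u t -> continuity_2d_pt g u t -> g u t <> 0 ->
  continuity_2d_pt (fun u t => f u t / g u t) u t.
Proof. intros. unfold Rdiv. apply continuity_2d_pt_mult; auto. apply continuity_2d_pt_inv; auto. Qed.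
Lemma c2_swap f u t : continuity_2d_pt f u t -> continuity_2d_pt (fun t u => f u t) t u.
Proof.
  intros H eps. destruct (H eps) as [d Hd]. exists d. intros. apply Hd; auto.
Qed.
Lemma c2_1d f u t : continuity_2d_pt f u t -> continuous (fun v => f v t) u.
Proof.
  intros H. apply continuity_pt_filterlim.
  intros eps Heps. destruct (H (mkposreal _ Heps)) as [d Hd].
  exists d. split. apply cond_pos. intros x [_ Hx].
  simpl in Hx. unfold R_dist in *. simpl. unfold R_dist.
  apply Hd; auto. rewrite Rminus_eq_0, Rabs_R0. apply cond_pos.
Qed.
Lemma c2_1d_t f u t : continuity_2d_pt f u t -> continuous (fun s => f u s) t.
Proof.
  intros H. apply (c2_1d (fun t u => f u t) t u). apply c2_swap. auto.
Qed.

Lemma param_unif (F : R -> R -> R) t0 :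
  (forall u, 0 <= u <= 1 -> continuity_2d_pt F u t0) ->
  forall eps : posreal, exists d : posreal, forall t u, Rabs (t - t0) < d -> 0 <= u <= 1 ->
    Rabs (F u t - F u t0) < eps.
Proof.
  intros HF eps.
  assert (He2 : 0 < eps / 2) by (destruct eps; simpl; lra).
  assert (Hex : forall u, exists dl : posreal, 0 <= u <= 1 -> forall u' t',
     Rabs (u' - u) < dl -> Rabs (t' - t0) < dl -> Rabs (F u' t' - F u t0) < eps / 2).
  { intro u. destruct (classic (0 <= u <= 1)) as [Hu|Hu].
    - destruct (HF u Hu (mkposreal _ He2)) as [dl Hdl]. exists dl. intros _. exact Hdl.
    - exists (mkposreal 1 Rlt_0_1). intro; contradiction. }
  set (delta := fun u => proj1_sig (constructive_indefinite_description _ (Hex u))).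
  assert (Hdelta : forall u, 0 <= u <= 1 -> forall u' t',
     Rabs (u' - u) < delta u -> Rabs (t' - t0) < delta u -> Rabs (F u' t' - F u t0) < eps / 2).
  { intro u. unfold delta. destruct (constructive_indefinite_description _ (Hex u)) as [dl Hdl].
    simpl. exact Hdl. }
  destruct (compactness_value_1d 0 1 delta) as [d Hd].
  exists d. intros t u Ht Hu.
  apply NNPP. intro Hc. apply (Hd u Hu). intros [w [Hw [Huw Hdw]]].
  apply Hc.
  assert (H1 := Hdelta w Hw u t Huw ltac:(lra)).
  assert (H2 := Hdelta w Hw u t0 Huw ltac:(rewrite Rminus_eq_0, Rabs_R0; apply cond_pos)).
  replace (F u t - F u t0) with ((F u t - F w t0) - (F u t0 - F w t0)) by ring.
  eapply Rle_lt_trans. apply Rabs_triang. rewrite Rabs_Ropp.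
  destruct eps; simpl in *; lra.
Qed.

Lemma param_RInt_pos (F : R -> R -> R) t0 :
  (forall u, 0 <= u <= 1 -> continuity_2d_pt F u t0) ->
  (forall t, t0 < t -> forall u, 0 <= u <= 1 -> continuity_2d_pt F u t) ->
  0 < RInt (fun u => F u t0) 0 1 ->
  exists s, t0 < s /\ 0 < RInt (fun u => F u s) 0 1.
Proof.
  intros H0 Hpos HI.
  set (I0 := RInt (fun u => F u t0) 0 1) in *.
  assert (He : 0 < I0 / 2) by lra.
  destruct (param_unif F t0 H0 (mkposreal _ He)) as [d Hd].
  assert (Hd0 := cond_pos d).
  exists (t0 + d / 2). split. lra.
  assert (Hc : forall t, (t = t0 \/ t0 < t) -> ex_RInt (fun u => F u t) 0 1).
  { intros t Ht. apply (ex_RInt_continuous (V:=R_CompleteNormedModule)). intros z Hz.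
    rewrite Rmin_left in Hz by lra. rewrite Rmax_right in Hz by lra.
    apply c2_1d. destruct Ht as [->|Ht]; auto. }
  assert (Hm : Rabs (RInt (fun u => F u (t0 + d/2) - F u t0) 0 1) <= (1 - 0) * (I0 / 2)).
  { apply abs_RInt_le_const. lra.
    apply (ex_RInt_minus (V:=R_NormedModule)); apply Hc; first [left; reflexivity | right; lra].
    intros u Hu. left. apply (Hd (t0 + d/2) u). replace (t0 + d/2 - t0) with (d/2) by ring.
    rewrite Rabs_pos_eq; lra. auto. }
  rewrite (RInt_minus (V:=R_CompleteNormedModule)) in Hm by (apply Hc; first [left; reflexivity | right; lra]).
  change (minus (RInt (fun u => F u (t0 + d / 2)) 0 1) (RInt (fun u => F u t0) 0 1)) with
    (RInt (fun u => F u (t0 + d / 2)) 0 1 - I0) in Hm.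
  apply Rabs_le_between in Hm. lra.
Qed.

Definition SS X Y u t := du X u t ^ 2 + du Y u t ^ 2.
Definition NN X Y u t := du X u t * du (du Y) u t - du Y u t * du (du X) u t.
Definition GG X Y u t := NN X Y u t / SS X Y u t.
Definition dGG X Y u t :=
  ((dt (du X) u t * du (du Y) u t + du X u t * dt (du (du Y)) u t
    - dt (du Y) u t * du (du X) u t - du Y u t * dt (du (du X)) u t) * SS X Y u t
   - NN X Y u t * (2 * du X u t * dt (du X) u t + 2 * du Y u t * dt (du Y) u t))
  / SS X Y u t ^ 2.
Definition HH X Y t u := (du X u t * dt (du Y) u t - du Y u t * dt (du X) u t) / SS X Y u t.
Definition dsp X Y u t :=
  (2 * du X u t * dt (du X) u t + 2 * du Y u t * dt (du Y) u t) / (2 * speed X Y u t).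

Ltac c2 a := repeat first [ apply c2_div | apply continuity_2d_pt_plus | apply continuity_2d_pt_minus
  | apply continuity_2d_pt_mult | apply continuity_2d_pt_opp | apply c2_sqrt | apply c2_pow
  | apply continuity_2d_pt_const
  | (apply (SM_cont a); [repeat first [apply SM_du | apply SM_dt]; assumption | lra]) ].

Lemma SS_pos X Y u t : 0 < speed X Y u t -> 0 < SS X Y u t.
Proof.
  unfold speed, SS. intros H. set (z := du X u t ^ 2 + du Y u t ^ 2) in *.
  assert (0 <= z) by (unfold z; nra).
  destruct H0 as [H0|H0]; auto. rewrite <- H0, sqrt_0 in H. lra.
Qed.

Lemma curv_speed X Y u t : 0 < speed X Y u t -> curv X Y u t * speed X Y u t = GG X Y u t.
Proof.
  intros H. assert (H2 : speed X Y u t ^ 2 = SS X Y u t).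
  { unfold speed, SS. rewrite pow2_sqrt; auto. nra. }
  unfold curv, GG, NN. rewrite <- H2. field. lra.
Qed.

Lemma cont_GG a X Y u t : SM a X -> SM a Y -> a < t -> 0 < speed X Y u t ->
  continuity_2d_pt (GG X Y) u t.
Proof.
  intros HX HY Ht Hs. assert (H := SS_pos _ _ _ _ Hs).
  unfold GG, NN. apply c2_div; [| |lra]; unfold SS; c2 a.
Qed.

Lemma cont_curv a X Y u t : SM a X -> SM a Y -> a < t -> 0 < speed X Y u t ->
  continuity_2d_pt (curv X Y) u t /\ continuity_2d_pt (speed X Y) u t.
Proof.
  intros HX HY Ht Hs. assert (Hs3 : speed X Y u t ^ 3 <> 0) by (apply pow_nonzero; lra).
  unfold speed in *. split; [unfold curv; unfold speed in Hs3 |]; c2 a; auto.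
Qed.

Lemma cont_dGG a X Y u t : SM a X -> SM a Y -> a < t -> 0 < speed X Y u t ->
  continuity_2d_pt (dGG X Y) u t.
Proof.
  intros HX HY Ht Hs. assert (H := SS_pos _ _ _ _ Hs).
  assert (H2 : SS X Y u t ^ 2 <> 0) by (apply pow_nonzero; lra).
  unfold dGG, NN. unfold SS in *. c2 a; auto.
Qed.

Lemma cont_dsp a X Y u t : SM a X -> SM a Y -> a < t -> 0 < speed X Y u t ->
  continuity_2d_pt (dsp X Y) u t.
Proof.
  intros HX HY Ht Hs. 
  assert (H2 : 2 * speed X Y u t <> 0) by lra.
  unfold dsp. unfold speed in *. c2 a; auto.
Qed.

Lemma dG_is a X Y u t : SM a X -> SM a Y -> a < t -> 0 < speed X Y u t ->
  is_derive (fun s => GG X Y u s) t (dGG X Y u t).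
Proof.
  intros HX HY Ht Hs. assert (H := SS_pos _ _ _ _ Hs).
  unfold GG, NN, dGG, NN. unfold SS in *.
  auto_derive.
  - repeat split; try (apply (SM_ext a); [repeat first [apply SM_du | apply SM_dt]; assumption | lra]).
    lra.
  - unfold dt. field. lra.
Qed.

Lemma dH_is a X Y u t : SM a X -> SM a Y -> a < t -> 0 < speed X Y u t ->
  is_derive (fun v => HH X Y t v) u (dGG X Y u t).
Proof.
  intros HX HY Ht Hs. assert (H := SS_pos _ _ _ _ Hs).
  assert (E1 : Derive (fun x => dt (du X) x t) u = dt (du (du X)) u t)
    by (apply (SM_schwarz a (du X)); [apply SM_du|]; auto).
  assert (E2 : Derive (fun x => dt (du Y) x t) u = dt (du (du Y)) u t)
    by (apply (SM_schwarz a (du Y)); [apply SM_du|]; auto).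
  assert (E3 : Derive (fun x => du X x t) u = du (du X) u t) by reflexivity.
  assert (E4 : Derive (fun x => du Y x t) u = du (du Y) u t) by reflexivity.
  unfold HH, dGG, NN. unfold SS in *.
  auto_derive.
  - repeat split; try (apply (SM_exu a); [repeat first [apply SM_du | apply SM_dt]; assumption | lra]).
    lra.
  - rewrite E1, E2, E3, E4. field. lra.
Qed.

Lemma dsp_is a X Y u t : SM a X -> SM a Y -> a < t -> 0 < speed X Y u t ->
  is_derive (fun s => speed X Y u s) t (dsp X Y u t).
Proof.
  intros HX HY Ht Hs. assert (H := SS_pos _ _ _ _ Hs).
  unfold dsp. unfold speed in *. unfold SS in *.
  auto_derive.
  - repeat split; try (apply (SM_ext a); [repeat first [apply SM_du | apply SM_dt]; assumption | lra]).
    lra.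
  - unfold dt. replace (du X u t * (du X u t * 1) + du Y u t * (du Y u t * 1)) with (du X u t ^ 2 + du Y u t ^ 2) by ring. field. lra.
Qed.

Lemma dsp_flow a X Y sigma1 sigma2 u t : SM a X -> SM a Y -> a < t -> 0 < speed X Y u t ->
  (forall v, is_derive (fun s => X v s) t ((sigma1 * curv X Y v t + sigma2) * nux X Y v t) /\
     is_derive (fun s => Y v s) t ((sigma1 * curv X Y v t + sigma2) * nuy X Y v t)) ->
  dsp X Y u t = - ((sigma1 * curv X Y u t + sigma2) * curv X Y u t * speed X Y u t).
Proof.
  intros HX HY Ht Hs Hfl.
  assert (HpX : forall v, dt X v t = (sigma1 * curv X Y v t + sigma2) * nux X Y v t)
    by (intro v; apply is_derive_unique; apply Hfl).
  assert (HpY : forall v, dt Y v t = (sigma1 * curv X Y v t + sigma2) * nuy X Y v t)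
    by (intro v; apply is_derive_unique; apply Hfl).
  assert (Z : forall v, du X v t * dt X v t + du Y v t * dt Y v t = 0).
  { intro v. rewrite HpX, HpY. unfold nux, nuy, tanx, tany. unfold Rdiv. ring. }
  assert (D1 : is_derive (fun v => du X v t * dt X v t + du Y v t * dt Y v t) u
     (du (du X) u t * dt X u t + du X u t * du (dt X) u t
      + (du (du Y) u t * dt Y u t + du Y u t * du (dt Y) u t))).
  { assert (E1 : Derive (fun x => dt X x t) u = du (dt X) u t) by reflexivity.
    assert (E2 : Derive (fun x => dt Y x t) u = du (dt Y) u t) by reflexivity.
    assert (E3 : Derive (fun x => du X x t) u = du (du X) u t) by reflexivity.
    assert (E4 : Derive (fun x => du Y x t) u = du (du Y) u t) by reflexivity.
    auto_derive.
    - repeat split; try (apply (SM_exu a); [repeat first [apply SM_du | apply SM_dt]; assumption | lra]).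
    - rewrite E1, E2, E3, E4. ring. }
  assert (D2 : Derive (fun v => du X v t * dt X v t + du Y v t * dt Y v t) u = 0).
  { rewrite (Derive_ext _ (fun _ => 0)) by apply Z. apply Derive_const. }
  assert (K : du (du X) u t * dt X u t + du X u t * du (dt X) u t
      + (du (du Y) u t * dt Y u t + du Y u t * du (dt Y) u t) = 0).
  { rewrite <- D2. symmetry. apply is_derive_unique. exact D1. }
  assert (S1 := SM_schwarz a X u t HX Ht).
  assert (S2 := SM_schwarz a Y u t HY Ht).
  unfold dsp. rewrite <- S1, <- S2.
  replace (2 * du X u t * du (dt X) u t + 2 * du Y u t * du (dt Y) u t) with
    (2 * (- (du (du X) u t * dt X u t + du (du Y) u t * dt Y u t))) by lra.
  rewrite HpX, HpY. unfold curv, nux, nuy, tanx, tany. field. lra.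
Qed.

Lemma loc2d_strip1 c (P : R -> R -> Prop) t u : c < t ->
  (forall t' u', c < t' -> P t' u') -> locally_2d P t u.
Proof.
  intros Ht HP. assert (Hp : 0 < t - c) by lra.
  exists (mkposreal _ Hp). intros t' u' H' _. apply HP.
  simpl in H'. apply Rabs_def2 in H'. lra.
Qed.

Lemma RInt_param_deriv (F dF : R -> R -> R) t c : c < t ->
  (forall u s, c < s -> is_derive (fun z => F u z) s (dF u s)) ->
  (forall u s, c < s -> continuity_2d_pt dF u s) ->
  (forall u s, c < s -> continuity_2d_pt F u s) ->
  is_derive (fun s => RInt (fun u => F u s) 0 1) t (RInt (fun u => dF u t) 0 1).
Proof.
  intros Ht HD HdC HC.
  replace (RInt (fun u => dF u t) 0 1) with (RInt (fun u => Derive (fun z => F u z) t) 0 1).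
  2:{ apply RInt_ext. intros u _. apply is_derive_unique. apply HD; auto. }
  apply (is_derive_RInt_param (fun s u => F u s)).
  - apply (filter_imp (fun y => c < y)). 
    + intros y Hy u _. eexists. apply HD. exact Hy.
    + apply open_gt. exact Ht.
  - intros u _. apply (continuity_2d_pt_ext_loc (fun s u => dF u s)).
    + apply (loc2d_strip1 c); auto. intros t' u' Ht'. symmetry. apply is_derive_unique. apply HD; auto.
    + apply (c2_swap dF). auto.
  - apply (filter_imp (fun y => c < y)).
    + intros y Hy. apply (ex_RInt_continuous (V:=R_CompleteNormedModule)). intros z _.
      apply (c2_1d F). auto.
    + apply open_gt. exact Ht.
Qed.

Lemma Theorem_main (sigma1 sigma2 : R) (a : R) (X Y : R -> R -> R) :
  0 < sigma1 -> 0 < sigma2 -> a < 0 -> SM a X -> SM a Y ->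
  (forall u t, X (u + 1) t = X u t /\ Y (u + 1) t = Y u t) ->
  (forall u t, 0 <= t -> 0 < speed X Y u t) ->
  (forall u t, 0 <= t ->
     is_derive (fun s => X u s) t ((sigma1 * curv X Y u t + sigma2) * nux X Y u t) /\
     is_derive (fun s => Y u s) t ((sigma1 * curv X Y u t + sigma2) * nuy X Y u t)) ->
  0 < winding X Y 0 -> False.
Proof.
  intros Hs1 Hs2 Ha HX HY Hper Hreg Hfl Hw.
  assert (HpX : forall u t, X (u + 1) t = X u t) by apply Hper.
  assert (HpY : forall u t, Y (u + 1) t = Y u t) by apply Hper.
  set (Th := fun t => RInt (fun u => curv X Y u t * speed X Y u t) 0 1).
  set (L := fun t => RInt (fun u => speed X Y u t) 0 1).
  assert (Hcc : forall u t, 0 <= t -> continuity_2d_pt (fun u t => curv X Y u t * speed X Y u t) u t).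
  { intros u t Ht. destruct (cont_curv a X Y u t) as [C1 C2]; auto; try lra.
    apply continuity_2d_pt_mult; auto. }
  assert (HTh0 : 0 < Th 0).
  { unfold winding in Hw. fold (Th 0) in Hw.
    assert (0 < / (2 * PI)) by (apply Rinv_0_lt_compat; assert (H := PI_RGT_0); lra).
    destruct (Rlt_le_dec 0 (Th 0)) as [H1|H1]; auto.
    assert (/ (2 * PI) * Th 0 <= 0) by nra. lra. }
  destruct (param_RInt_pos (fun u t => curv X Y u t * speed X Y u t) 0) as [s [Hs HThs]].
  { intros u _. apply Hcc. lra. }
  { intros t Ht u _. apply Hcc. lra. }
  { exact HTh0. }
  fold (Th s) in HThs.
  assert (HdTh : forall t, 0 < t -> is_derive Th t 0).
  { intros t Ht.
    apply (is_derive_ext_loc (fun s => RInt (fun u => GG X Y u s) 0 1)).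
    { apply (filter_imp (fun y => 0 < y)); [|apply open_gt; exact Ht].
      intros y Hy. unfold Th. apply RInt_ext. intros u _. symmetry. apply curv_speed.
      apply Hreg. lra. }
    assert (D : is_derive (fun s => RInt (fun u => GG X Y u s) 0 1) t (RInt (fun u => dGG X Y u t) 0 1)).
    { apply (RInt_param_deriv (GG X Y) (dGG X Y) t 0 Ht).
      - intros u s' Hs'. apply (dG_is a); auto; try lra. apply Hreg; lra.
      - intros u s' Hs'. apply (cont_dGG a); auto; try lra. apply Hreg; lra.
      - intros u s' Hs'. apply (cont_GG a); auto; try lra. apply Hreg; lra. }
    enough (E : RInt (fun u => dGG X Y u t) 0 1 = 0) by (rewrite E in D; exact D).
    rewrite (RInt_ext _ (Derive (HH X Y t))).
    2:{ intros u _. symmetry. apply is_derive_unique. apply (dH_is a); auto; try lra. apply Hreg; lra. }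
    rewrite RInt_Derive.
    - replace 1 with (0 + 1) at 1 by ring. unfold HH, SS.
      rewrite !(per_du X), !(per_du Y), !(per_dt (du X)), !(per_dt (du Y)); auto;
        try (apply per_du; auto). apply Rminus_diag_eq. reflexivity.
    - intros x _. eexists. apply (dH_is a); auto; try lra. apply Hreg; lra.
    - intros x _. apply (continuous_ext (fun v => dGG X Y v t)).
      + intro v. symmetry. apply is_derive_unique. apply (dH_is a); auto; try lra. apply Hreg; lra.
      + apply (c2_1d (dGG X Y)). apply (cont_dGG a); auto; try lra. apply Hreg; lra. }
  assert (HThc : forall t, s <= t -> Th t = Th s).
  { intros t Hst.
    destruct (MVT_gen Th s t (fun _ => 0)) as [c [Hc Heq]].
    - intros x Hx. rewrite Rmin_left in Hx by lra. apply HdTh. lra.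
    - intros x Hx. rewrite Rmin_left in Hx by lra. apply continuity_pt_filterlim.
      apply (ex_derive_continuous (K:=R_AbsRing) (V:=R_NormedModule)). exists 0. apply HdTh. lra.
    - rewrite Rmult_0_l in Heq. lra. }
  assert (HdL : forall t, 0 < t -> is_derive L t (RInt (fun u => dsp X Y u t) 0 1)).
  { intros t Ht. apply (RInt_param_deriv (speed X Y) (dsp X Y) t 0 Ht).
    - intros u s' Hs'. apply (dsp_is a); auto; try lra. apply Hreg; lra.
    - intros u s' Hs'. apply (cont_dsp a); auto; try lra. apply Hreg; lra.
    - intros u s' Hs'. apply (cont_curv a); auto; try lra. apply Hreg; lra. }
  assert (HLle : forall t, 0 < t -> RInt (fun u => dsp X Y u t) 0 1 <= - sigma2 * Th t).
  { intros t Ht.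
    rewrite (RInt_ext _ (fun u => - ((sigma1 * curv X Y u t + sigma2) * curv X Y u t * speed X Y u t))).
    2:{ intros u _. apply (dsp_flow a); auto; try lra. apply Hreg; lra.
        intro v. apply Hfl. lra. }
    assert (HC : forall u, continuity_2d_pt (curv X Y) u t /\ continuity_2d_pt (speed X Y) u t).
    { intro u. apply (cont_curv a); auto; try lra. apply Hreg; lra. }
    assert (exR : ex_RInt (fun u => curv X Y u t * speed X Y u t) 0 1).
    { apply (ex_RInt_continuous (V:=R_CompleteNormedModule)). intros z _.
      apply (c2_1d (fun u t => curv X Y u t * speed X Y u t)). apply Hcc. lra. }
    apply Rle_trans with (RInt (fun u => - sigma2 * (curv X Y u t * speed X Y u t)) 0 1).
    - apply RInt_le. lra.
      + apply (ex_RInt_continuous (V:=R_CompleteNormedModule)). intros z _.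
        apply (c2_1d (fun u t => - ((sigma1 * curv X Y u t + sigma2) * curv X Y u t * speed X Y u t))).
        destruct (HC z) as [C1 C2].
        apply continuity_2d_pt_opp. apply continuity_2d_pt_mult; auto.
        apply continuity_2d_pt_mult; auto. apply continuity_2d_pt_plus; auto.
        apply continuity_2d_pt_mult; auto. apply continuity_2d_pt_const. apply continuity_2d_pt_const.
      + apply (ex_RInt_continuous (V:=R_CompleteNormedModule)). intros z _.
        apply (c2_1d (fun u t => - sigma2 * (curv X Y u t * speed X Y u t))).
        apply continuity_2d_pt_mult. apply continuity_2d_pt_const. apply Hcc. lra.
      + intros u _. assert (0 < speed X Y u t) by (apply Hreg; lra).
        assert (0 <= curv X Y u t * curv X Y u t) by nra.
        assert (0 <= sigma1 * (curv X Y u t * curv X Y u t) * speed X Y u t).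
        { apply Rmult_le_pos; [apply Rmult_le_pos|]; lra. }
        nra.
    - apply Req_le. exact (RInt_scal (V:=R_CompleteNormedModule) (fun u => curv X Y u t * speed X Y u t) 0 1 (-sigma2) exR). }
  assert (HL0 : forall t, 0 <= t -> 0 <= L t).
  { intros t Ht. apply RInt_ge_0. lra.
    - apply (ex_RInt_continuous (V:=R_CompleteNormedModule)). intros z _.
      apply (c2_1d (speed X Y)). apply (cont_curv a); auto; try lra.
    - intros x _. apply sqrt_pos. }
  set (c := sigma2 * Th s).
  assert (Hc : 0 < c) by (unfold c; nra).
  set (t1 := s + L s / c + 1).
  assert (HLs := HL0 s ltac:(lra)).
  assert (Hdiv : c * (L s / c) = L s) by (field; lra).
  assert (Ht1 : s < t1) by (unfold t1; assert (0 <= L s / c) by (apply Rdiv_le_0_compat; lra); lra).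
  destruct (MVT_gen L s t1 (fun x => RInt (fun u => dsp X Y u x) 0 1)) as [xi [Hxi Heq]].
  - intros x Hx. rewrite Rmin_left in Hx by lra. apply HdL. lra.
  - intros x Hx. rewrite Rmin_left in Hx by lra. apply continuity_pt_filterlim.
    apply (ex_derive_continuous (K:=R_AbsRing) (V:=R_NormedModule)). eexists. apply HdL. lra.
  - rewrite Rmin_left, Rmax_right in Hxi by lra.
    assert (H1 := HLle xi ltac:(lra)). rewrite (HThc xi) in H1 by lra. fold c in H1.
    assert (H2 : t1 - s = L s / c + 1) by (unfold t1; ring).
    assert (H3 := HL0 t1 ltac:(lra)).
    rewrite H2 in Heq.
    assert (H4 : RInt (fun u => dsp X Y u xi) 0 1 * (L s / c + 1) <= - c * (L s / c + 1)).
    { apply Rmult_le_compat_r. assert (0 <= L s / c) by (apply Rdiv_le_0_compat; lra). lra.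
      replace (- c) with (- sigma2 * Th s) by (unfold c; ring). exact H1. }
    assert (H5 : - c * (L s / c + 1) = - L s - c) by (rewrite <- Hdiv; field; lra).
    lra.
Qed.

Theorem lemma2p6 (sigma1 sigma2 : R) (T : Rbar) (X Y : R -> R -> R) :
  0 < sigma1 -> 0 < sigma2 ->
  (* smooth family on S^1 x [0,T) (smooth up to t = 0) *)
  (exists a, a < 0 /\ smooth_strip a T X /\ smooth_strip a T Y) ->
  (* closed: 1-periodic in u *)
  (forall u t, X (u + 1) t = X u t /\ Y (u + 1) t = Y u t) ->
  (* regular curves *)
  (forall u t, 0 <= t -> Rbar_lt (Finite t) T -> 0 < speed X Y u t) ->
  (* embedded curves *)
  (forall t, 0 <= t -> Rbar_lt (Finite t) T ->
     forall u1 u2, 0 <= u1 < 1 -> 0 <= u2 < 1 ->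
       X u1 t = X u2 t -> Y u1 t = Y u2 t -> u1 = u2) ->
  (* the flow d/dt gamma = (sigma1 k + sigma2) nu *)
  (forall u t, 0 <= t -> Rbar_lt (Finite t) T ->
     is_derive (fun s => X u s) t ((sigma1 * curv X Y u t + sigma2) * nux X Y u t) /\
     is_derive (fun s => Y u s) t ((sigma1 * curv X Y u t + sigma2) * nuy X Y u t)) ->
  (* positive winding number of the initial curve *)
  0 < winding X Y 0 ->
  T <> p_infty.
Proof.
  intros Hs1 Hs2 [a [Ha [HX HY]]] Hper Hreg _ Hfl Hw HT. subst T.
  apply (Theorem_main sigma1 sigma2 a X Y); auto.
  - intros u t Ht. apply Hreg; auto. exact I.
  - intros u t Ht. apply Hfl; auto. exact I.
Qed.
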